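(* Let $0\le f\le\lfloor n/2\rfloor$ and $d\in\mathcal D_{\nu_f}$. Suppose $d=d's_j$ for some $1\le j\le n-1$ and $d'\in\mathfrak S_n$ with $\ell(d)=\ell(d')+1$. Then $d'\in\mathcal D_{\nu_f}$.
   Context: $\mathfrak S_n$ acts on $\{1,\dots,n\}$ on the right: $(a)(\sigma\tau)=((a)\sigma)\tau$; $s_j=(j,j+1)$ and $\ell$ is the Coxeter length. For $0\le f\le\lfloor n/2\rfloor$ let $\nu_f=((2^f),(n-2f))$, a bipartition of $n$ (first component $f$ rows of length $2$, second component one row of length $n-2f$), and let $\mathfrak t^{\nu_f}$ be the bitableau with $1,\dots,n$ entered in order along successive rows of the first component and then along the row of the second component. For $d\in\mathfrak S_n$, $\mathfrak t^{\nu_f}d$ is obtained by replacing each entry $a$ by $(a)d$. $\mathcal D_{\nu_f}$ is the set of $d\in\mathfrak S_n$ such that $\mathfrak t^{\nu_f}d$ is row standard (entries increase along each row of each component) and the first column of its first component increases from top to bottom. *)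

(* Defs.v *)
From mathcomp Require Import all_boot all_order all_fingroup.
Set Implicit Arguments. Unset Strict Implicit. Unset Printing Implicit Defensive.

(* Conventions (0-indexed): the symbol a in {1,...,n} is the ordinal a-1 : 'I_n.
   MathComp permutations compose as (s * t) x = t (s x), i.e. exactly the
   right action (a)(st) = ((a)s)t of the paper; (a)d is written d a. *)

Definition coxeter_length n (s : 'S_n) : nat :=
  #|[set p : 'I_n * 'I_n | (p.1 < p.2) && (s p.2 < s p.1)]|.

(* d \in D_{nu_f}: t^{nu_f} d is row standard and the first column of its first
   component increases.  In t^{nu_f} (0-indexed) row r < f of the first component
   is (2r, 2r+1), and the second component is the row 2f, 2f+1, ..., n-1. *)
Definition in_D_nu n (f : nat) (d : 'S_n) : Prop :=
  [/\
      (forall i j : 'I_n, ~~ odd i -> val j = (val i).+1 -> val j < 2 * f ->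
         d i < d j),
      (forall i j : 'I_n, 2 * f <= val i -> val j = (val i).+1 -> d i < d j)
    &
      (forall i j : 'I_n, ~~ odd i -> val j = (val i).+2 -> val j < 2 * f ->
         d i < d j)].

(* Main.v *)
Require Import Defs.
From mathcomp Require Import all_boot all_order all_fingroup.
From mathcomp Require Import zify.

Lemma tperm_mono n (j k a b : 'I_n) : val k = (val j).+1 -> val a < val b ->
  ~ (a = j /\ b = k) -> val (tperm j k a) < val (tperm j k b).
Proof.
move=> hjk hab hn.
case: (tpermP j k a) => [ea|ea|/eqP aj /eqP ak]; case: (tpermP j k b) => [eb|eb|/eqP bj /eqP bk]; subst.
all: try (by exfalso; apply: hn); try lia.
all: rewrite ?tpermL ?tpermR.
all: repeat match goal with H : is_true (?x != ?y) |- _ => move/eqP: H => H; have : val x <> val y by move=> /val_inj end.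
all: intros; simpl in *; lia.
Qed.

Theorem lemma5p2 (n f : nat) (hf : f <= n./2) (d d' : 'S_n) (j k : 'I_n)
    (hjk : val k = (val j).+1) :
  in_D_nu f d ->
  d = (d' * tperm j k)%g ->
  coxeter_length d = (coxeter_length d').+1 ->
  in_D_nu f d'.
Proof.
move=> [h1 h2 h3] hd hl.
have hd' : d' = (d * tperm j k)%g by rewrite hd -mulgA tperm2 mulg1.
have ev x : d' x = tperm j k (d x) by rewrite hd' permM.
have key x y : val x < val y -> val (d x) < val (d y) -> val (d' x) < val (d' y).
  move=> hxy hdxy; rewrite !ev; apply: tperm_mono => // -[ej ek].
  pose A := [set p : 'I_n * 'I_n | (p.1 < p.2) && (d p.2 < d p.1)].
  pose B := [set p : 'I_n * 'I_n | (p.1 < p.2) && (d' p.2 < d' p.1)].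
  have : A \proper B.
    apply/properP; split.
      apply/subsetP => -[p1 p2]; rewrite !inE /= => /andP[hp hq]; rewrite hp /=.
      rewrite !ev; apply: tperm_mono => // -[e2 e1].
      have e1' : p1 = y by apply: (perm_inj (s:=d)); rewrite e1 ek.
      have e2' : p2 = x by apply: (perm_inj (s:=d)); rewrite e2 ej.
      move: hp hxy; rewrite e1' e2' /=; lia.
    exists (x, y); rewrite !inE /= hxy /=.
      rewrite !ev ej ek tpermL tpermR; simpl in *; lia.
    rewrite -leqNgt; exact: ltnW.
  move=> /proper_card. rewrite /coxeter_length in hl.
  rewrite -/A -/B in hl. lia.
split.
- move=> i i' hi e hlt; apply: key; [simpl in *; lia | exact: h1].
- move=> i i' hi e; apply: key; [simpl in *; lia | exact: h2].
- move=> i i' hi e hlt; apply: key; [simpl in *; lia | exact: h3].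
Qed.
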